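(* For every integer $g\ge1$ there exists a polyhedral map $P$ of genus $g$ such that truncation increases the symmetry of $P$, i.e. $|\mathrm{Aut}(T(P))|>|\mathrm{Aut}(P)|$.
   Context: A polyhedral map is a 3-connected graph embedded in a closed orientable surface such that every face is an open disc and the closures of any two faces have connected intersection; its genus is that of the surface; $\mathrm{Aut}(P)$ is its automorphism group. The truncation $T(P)$ has one vertex $(v,e)$ for every pair of a vertex $v$ and an incident edge $e$ of $P$; for each edge $e=vw$, $(v,e)$ and $(w,e)$ are adjacent, and $(v,e),(v,e')$ are adjacent whenever $e,e'$ are consecutive around $v$ (each vertex of degree $d$ becomes a face of size $d$, each face of size $k$ becomes a face of size $2k$). Every automorphism of $P$ induces an automorphism of $T(P)$, so $|\mathrm{Aut}(P)|\le|\mathrm{Aut}(T(P))|$. *)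

(* Defs.v *)
From mathcomp Require Import all_boot all_order all_algebra all_fingroup.
Set Implicit Arguments. Unset Strict Implicit. Unset Printing Implicit Defensive.
Import GRing.Theory Num.Theory.

(* Maps on closed surfaces are encoded combinatorially by their flag systems:
   a finite set D of flags with three fixed-point-free involutions r0 r1 r2
   (r0 changes the vertex, r1 the edge, r2 the face of a flag), r0 r2 a
   fixed-point-free involution, and the flag graph connected. *)

Section Maps.
Variable D : finType.
Variables r0 r1 r2 : D -> D.

Definition fpf_involution (r : D -> D) : Prop := forall x, r (r x) = x /\ r x != x.

Definition flag_rel : rel D := fun x y => (y == r0 x) || (y == r1 x) || (y == r2 x).

Definition is_map : Prop :=
  [/\ (0 < #|D|)%N, fpf_involution r0 /\ fpf_involution r1 /\ fpf_involution r2,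
      (forall x, r0 (r2 x) = r2 (r0 x) /\ r0 (r2 x) != x)
    & forall x y, connect flag_rel x y].

Definition orientable : Prop :=
  exists c : D -> bool, forall x,
    [/\ c (r0 x) = ~~ c x, c (r1 x) = ~~ c x & c (r2 x) = ~~ c x].

Definition vrel : rel D := fun x y => (y == r1 x) || (y == r2 x).
Definition erel : rel D := fun x y => (y == r0 x) || (y == r2 x).
Definition frel : rel D := fun x y => (y == r0 x) || (y == r1 x).

Definition vcls (x : D) : {set D} := [set y | connect vrel x y].
Definition ecls (x : D) : {set D} := [set y | connect erel x y].
Definition fcls (x : D) : {set D} := [set y | connect frel x y].

Definition verts : {set {set D}} := [set vcls x | x : D].
Definition edges : {set {set D}} := [set ecls x | x : D].
Definition faces : {set {set D}} := [set fcls x | x : D].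

Definition euler_char : int := (#|verts|%:Z - #|edges|%:Z + #|faces|%:Z)%R.

Definition has_genus (g : nat) : Prop :=
  orientable /\ euler_char = (2 - 2 * g%:Z)%R.

Definition adj (u w : {set D}) : bool :=
  (u != w) && [exists x, (x \in u) && (r0 x \in w)].

Definition simple_graph : Prop :=
  (forall x, vcls (r0 x) != vcls x) /\
  (forall x y, vcls x = vcls y -> vcls (r0 x) = vcls (r0 y) -> ecls x = ecls y).

Definition three_connected : Prop :=
  (4 <= #|verts|)%N /\
  forall S : {set {set D}}, (#|S| <= 2)%N ->
    {in verts :\: S &, forall u w,
      connect (fun a b => [&& a \in verts :\: S, b \in verts :\: S & adj a b]) u w}.

(* closures of two distinct faces meet in a connected set: the common vertices
   and common edges form a connected (possibly empty) subgraph *)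
Definition faces_meet_connected : Prop :=
  forall x y, fcls x != fcls y ->
    let CV := [set v in verts | (v :&: fcls x != set0) && (v :&: fcls y != set0)] in
    let CE := [set e in edges | (e :&: fcls x != set0) && (e :&: fcls y != set0)] in
    {in CV &, forall u w,
      connect (fun a b => [&& a \in CV, b \in CV &
                 [exists e in CE, exists z in e, (z \in a) && (r0 z \in b)]]) u w}.

Definition polyhedral_map : Prop :=
  [/\ is_map, simple_graph, three_connected & faces_meet_connected].

Definition map_aut : {set {perm D}} :=
  [set p : {perm D} | [forall x, [&& p (r0 x) == r0 (p x),
                                     p (r1 x) == r1 (p x) & p (r2 x) == r2 (p x)]]].

(* For a flag F = (v,e,f) of P:
   (F,0) = ((v,e), edge (v,e)-(w,e), face f),
   (F,1) = ((v,e), edge (v,e)-(v,e') at the corner (v,f), face f),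
   (F,2) = ((v,e), edge (v,e)-(v,e') at the corner (v,f), face of v). *)
Definition trunc_r0 (z : D * 'I_3) : D * 'I_3 :=
  let: (x, i) := z in if val i == 0%N then (r0 x, i) else (r1 x, i).
Definition trunc_r1 (z : D * 'I_3) : D * 'I_3 :=
  let: (x, i) := z in
  if val i == 0%N then (x, inord 1) else if val i == 1%N then (x, inord 0)
  else (r2 x, i).
Definition trunc_r2 (z : D * 'I_3) : D * 'I_3 :=
  let: (x, i) := z in
  if val i == 0%N then (r2 x, i) else if val i == 1%N then (x, inord 2)
  else (x, inord 1).

End Maps.

(* Main.v *)
Require Import Defs.
From mathcomp Require Import all_boot all_order all_algebra all_fingroup.
From mathcomp Require Import zify.
Set Implicit Arguments. Unset Strict Implicit. Unset Printing Implicit Defensive.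
Import GRing.Theory Num.Theory.

(* Construction: for g = n+1, the n+1-fold cyclic branched cover of the
   K7 triangulation of the torus, branched at one vertex and one (non-incident) face. *)

Definition btab : seq (seq nat) := [:: [:: 1; 0; 3; 2; 5; 4; 7; 6; 9; 8; 11; 10; 13; 12; 15; 14; 17; 16; 19; 18; 21; 20; 23; 22; 25; 24; 27; 26; 29; 28; 31; 30; 33; 32; 35; 34; 37; 36; 39; 38; 41; 40; 43; 42; 45; 44; 47; 46; 49; 48; 51; 50; 53; 52; 55; 54; 57; 56; 59; 58; 61; 60; 63; 62; 65; 64; 67; 66; 69; 68; 71; 70; 73; 72; 75; 74; 77; 76; 79; 78; 81; 80; 83; 82]; [:: 2; 4; 0; 5; 1; 3; 8; 10; 6; 11; 7; 9; 14; 16; 12; 17; 13; 15; 20; 22; 18; 23; 19; 21; 26; 28; 24; 29; 25; 27; 32; 34; 30; 35; 31; 33; 38; 40; 36; 41; 37; 39; 44; 46; 42; 47; 43; 45; 50; 52; 48; 53; 49; 51; 56; 58; 54; 59; 55; 57; 62; 64; 60; 65; 61; 63; 68; 70; 66; 71; 67; 69; 74; 76; 72; 77; 73; 75; 80; 82; 78; 83; 79; 81]; [:: 6; 7; 14; 15; 48; 49; 0; 1; 26; 27; 54; 55; 18; 19; 2; 3; 60; 61; 12; 13; 32; 33; 46; 47; 30; 31; 8; 9; 70; 71; 24; 25; 20; 21; 76; 77; 42; 43; 50; 51; 66; 67; 36; 37; 56; 57; 22; 23; 4; 5; 38; 39; 72; 73; 10; 11; 44; 45; 82; 83; 16; 17;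 68; 69; 78; 79; 40; 41; 62; 63; 28; 29; 52; 53; 80; 81; 34; 35; 64; 65; 74; 75; 58; 59]].
Definition vtab : seq (seq int) := [:: [:: Posz 0; Posz 0; Posz 0; Posz 0; Posz 1; Negz 0; Posz 0; Posz 0; Posz 0; Posz 0; Posz 0; Posz 0; Posz 0; Posz 0; Posz 0; Posz 0; Posz 0; Posz 0; Posz 0; Posz 0; Posz 0; Posz 0; Posz 0; Posz 0; Posz 0; Posz 0; Posz 0; Posz 0; Posz 0; Posz 0; Posz 0; Posz 0; Posz 0; Posz 0; Posz 0; Posz 0; Posz 0; Posz 0; Posz 0; Posz 0; Posz 0; Posz 0; Posz 0; Posz 0; Posz 0; Posz 0; Posz 0; Posz 0; Posz 1; Negz 0; Posz 0; Posz 0; Posz 0; Posz 0; Posz 0; Posz 0; Posz 0; Posz 0; Posz 0; Posz 0; Posz 0; Posz 0; Posz 0; Posz 0; Posz 0; Posz 0; Posz 0; Posz 0; Posz 0; Posz 0; Posz 0; Posz 0; Posz 0; Posz 0; Posz 0; Posz 0; Posz 0; Posz 0; Posz 0; Posz 0; Posz 0; Posz 0; Posz 0; Posz 0]; [:: Posz 1; Posz 0; Negz 0; Posz 0; Posz 0; Posz 0; Posz 0; Posz 0; Posz 0; Posz 0; Posz 0; Posz 0; Posz 0; Posz 0; Posz 0; Posz 0; Posz 0; Posz 0; Posz 0; Posz 0; Posz 0; Posz 0; Posz 0; Posz 0; Posz 0; Posz 0; Posz 0; Posz 0; Posz 0; Posz 0; Posz 0; Posz 0; Posz 0; Posz 0;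 Posz 0; Posz 0; Posz 0; Posz 0; Posz 0; Posz 0; Posz 0; Posz 0; Posz 0; Posz 0; Posz 0; Posz 0; Posz 0; Posz 0; Posz 0; Posz 0; Posz 0; Posz 0; Posz 0; Posz 0; Posz 0; Posz 0; Posz 0; Posz 0; Posz 0; Posz 0; Posz 0; Posz 0; Posz 0; Posz 0; Posz 0; Posz 0; Posz 0; Posz 0; Posz 0; Posz 0; Posz 0; Posz 0; Posz 0; Posz 0; Posz 0; Posz 0; Posz 0; Posz 0; Posz 0; Posz 0; Posz 0; Posz 0; Posz 0; Posz 0]; [:: Posz 0; Posz 0; Posz 0; Posz 0; Posz 0; Posz 0; Posz 0; Posz 0; Posz 0; Posz 0; Posz 0; Posz 0; Posz 0; Posz 0; Posz 0; Posz 0; Posz 0; Posz 0; Posz 0; Posz 0; Posz 0; Posz 0; Posz 0; Posz 0; Posz 0; Posz 0; Posz 0; Posz 0; Posz 0; Posz 0; Posz 0; Posz 0; Posz 0; Posz 0; Posz 0; Posz 0; Posz 0; Posz 0; Posz 0; Posz 0; Posz 0; Posz 0; Posz 0; Posz 0; Posz 0; Posz 0; Posz 0; Posz 0; Posz 0; Posz 0; Posz 0; Posz 0; Posz 0; Posz 0; Posz 0; Posz 0; Posz 0; Posz 0; Posz 0; Posz 0; Posz 0; Posz 0; Posz 0; Posz 0; Posz 0; Posz 0; Posz 0; Posz 0; Posz 0; Posz 0; Posz 0; Posz 0; Posz 0; Posz 0; Posz 0; Posz 0; Posz 0; Posz 0; Posz 0; Posz 0; Posz 0; Posz 0; Posz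 0; Posz 0]].
Definition bvn_t : seq nat := [:: 0; 1; 0; 3; 1; 3; 0; 1; 0; 5; 1; 5; 0; 2; 0; 3; 2; 3; 0; 2; 0; 6; 2; 6; 0; 4; 0; 5; 4; 5; 0; 4; 0; 6; 4; 6; 1; 2; 1; 4; 2; 4; 1; 2; 1; 6; 2; 6; 1; 3; 1; 4; 3; 4; 1; 5; 1; 6; 5; 6; 2; 3; 2; 5; 3; 5; 2; 4; 2; 5; 4; 5; 3; 4; 3; 6; 4; 6; 3; 5; 3; 6; 5; 6].
Definition be_t : seq nat := [:: 0; 0; 2; 2; 7; 7; 0; 0; 4; 4; 9; 9; 1; 1; 2; 2; 11; 11; 1; 1; 5; 5; 14; 14; 3; 3; 4; 4; 18; 18; 3; 3; 5; 5; 19; 19; 6; 6; 8; 8; 12; 12; 6; 6; 10; 10; 14; 14; 7; 7; 8; 8; 15; 15; 9; 9; 10; 10; 20; 20; 11; 11; 13; 13; 16; 16; 12; 12; 13; 13; 18; 18; 15; 15; 17; 17; 19; 19; 16; 16; 17; 17; 20; 20].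
Definition bfn_t : seq nat := [:: 1; 1; 1; 1; 1; 1; 2; 2; 2; 2; 2; 2; 3; 3; 3; 3; 3; 3; 4; 4; 4; 4; 4; 4; 5; 5; 5; 5; 5; 5; 6; 6; 6; 6; 6; 6; 7; 7; 7; 7; 7; 7; 8; 8; 8; 8; 8; 8; 0; 0; 0; 0; 0; 0; 9; 9; 9; 9; 9; 9; 10; 10; 10; 10; 10; 10; 11; 11; 11; 11; 11; 11; 12; 12; 12; 12; 12; 12; 13; 13; 13; 13; 13; 13].
Definition vcanon_t : seq nat := [:: 0; 1; 13; 3; 25; 9; 21].
Definition ecanon_t : seq nat := [:: 0; 12; 2; 24; 8; 20; 36; 4; 38; 10; 44; 16; 40; 62; 22; 52; 64; 74; 28; 34; 58].
Definition fcanon_t : seq nat := [:: 48; 0; 6; 12; 18; 24; 30; 36; 42; 54; 60; 66; 72; 78].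
Definition eoff_t : seq int := [:: Posz 0; Posz 0; Posz 0; Posz 0; Posz 0; Posz 1; Posz 0; Posz 0; Posz 0; Posz 0; Posz 0; Posz 0; Posz 0; Posz 0; Posz 0; Posz 0; Posz 0; Posz 0; Posz 0; Posz 0; Posz 0; Posz 0; Posz 0; Posz 0; Posz 0; Posz 0; Posz 0; Posz 0; Posz 0; Posz 0; Posz 0; Posz 0; Posz 0; Posz 0; Posz 0; Posz 0; Posz 0; Posz 0; Posz 0; Posz 0; Posz 0; Posz 0; Posz 0; Posz 0; Posz 0; Posz 0; Posz 0; Posz 0; Posz 0; Posz 1; Posz 0; Posz 0; Posz 0; Posz 0; Posz 0; Posz 0; Posz 0; Posz 0; Posz 0; Posz 0; Posz 0; Posz 0; Posz 0; Posz 0; Posz 0; Posz 0; Posz 0; Posz 0; Posz 0; Posz 0; Posz 0; Posz 0; Posz 0; Posz 0; Posz 0; Posz 0; Posz 0; Posz 0; Posz 0; Posz 0; Posz 0; Posz 0; Posz 0; Posz 0].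
Definition foff_t : seq int := [:: Posz 0; Posz 0; Posz 1; Posz 1; Posz 0; Posz 1; Posz 0; Posz 0; Posz 0; Posz 0; Posz 0; Posz 0; Posz 0; Posz 0; Posz 0; Posz 0; Posz 0; Posz 0; Posz 0; Posz 0; Posz 0; Posz 0; Posz 0; Posz 0; Posz 0; Posz 0; Posz 0; Posz 0; Posz 0; Posz 0; Posz 0; Posz 0; Posz 0; Posz 0; Posz 0; Posz 0; Posz 0; Posz 0; Posz 0; Posz 0; Posz 0; Posz 0; Posz 0; Posz 0; Posz 0; Posz 0; Posz 0; Posz 0; Posz 0; Posz 0; Posz 0; Posz 0; Posz 0; Posz 0; Posz 0; Posz 0; Posz 0; Posz 0; Posz 0; Posz 0; Posz 0; Posz 0; Posz 0; Posz 0; Posz 0; Posz 0; Posz 0; Posz 0; Posz 0; Posz 0; Posz 0; Posz 0; Posz 0; Posz 0; Posz 0; Posz 0; Posz 0; Posz 0; Posz 0; Posz 0; Posz 0; Posz 0; Posz 0; Posz 0].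
Definition col_t : seq bool := [:: true; false; false; true; true; false; false; true; true; false; false; true; false; true; true; false; false; true; true; false; false; true; true; false; true; false; false; true; true; false; false; true; true; false; false; true; true; false; false; true; true; false; false; true; true; false; false; true; false; true; true; false; false; true; true; false; false; true; true; false; true; false; false; true; true; false; false; true; true; false; false; true; true; false; false; true; true; false; false; true; true; false; false; true].
Definition vword_t : seq (seq nat) := [:: [:: ]; [:: ]; [:: 1]; [:: ]; [:: 1]; [:: 1]; [:: 2]; [:: 2]; [:: 1; 2]; [:: ]; [:: 1; 2]; [:: 1]; [:: 1; 2; 1]; [:: ]; [:: 2; 1]; [:: 2]; [:: 1]; [:: 1; 2]; [:: 2; 1; 2; 1]; [:: 2]; [:: 1; 2; 1; 2; 1]; [:: ]; [:: 1; 2]; [:: 1]; [:: 1; 2; 1; 2]; [:: ]; [:: 2; 1; 2]; [:: 2]; [:: 1]; [:: 1; 2]; [:: 2; 1; 2; 1; 2]; [:: 2]; [:: 2; 1; 2; 1; 2; 1]; [:: 2]; [:: 1; 2]; [:: 1; 2]; [:: 1; 2; 1; 2; 1]; [:: 2; 1; 2; 1; 2]; [:: 2; 1; 2; 1]; [:: 1; 2; 1; 2; 1]; [:: 2; 1; 2; 1; 2; 1]; [:: 2; 1; 2; 1]; [:: 2; 1; 2; 1; 2; 1]; [:: 1; 2; 1; 2]; [:: 2; 1; 2; 1; 2]; [:: 1; 2; 1]; [:: 2; 1; 2]; [:: 2; 1]; [:: 2; 1]; [:: 2; 1]; [:: 1; 2; 1]; [:: 2; 1; 2; 1; 2; 1];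 [:: 1; 2; 1]; [:: 2; 1; 2; 1; 2]; [:: 2; 1; 2]; [:: 2; 1]; [:: 1; 2; 1; 2]; [:: 2; 1; 2; 1]; [:: 1; 2; 1]; [:: 1; 2; 1; 2; 1]; [:: 2; 1]; [:: 2; 1; 2]; [:: 1; 2; 1]; [:: 2; 1; 2; 1; 2]; [:: 1; 2; 1; 2]; [:: 2; 1; 2; 1; 2; 1]; [:: 1; 2; 1; 2; 1]; [:: 1; 2; 1]; [:: 2; 1; 2; 1]; [:: 1; 2; 1; 2]; [:: 2; 1]; [:: 2; 1; 2]; [:: 2; 1; 2; 1]; [:: 1; 2; 1; 2]; [:: 1; 2; 1; 2; 1]; [:: 1; 2; 1; 2]; [:: 2; 1; 2]; [:: 2; 1; 2]; [:: 2; 1; 2; 1; 2]; [:: 1; 2; 1; 2; 1]; [:: 2; 1; 2; 1; 2; 1]; [:: 2; 1; 2; 1; 2]; [:: 2; 1; 2; 1]; [:: 2; 1; 2; 1; 2; 1]].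
Definition eword_t : seq (seq nat) := [:: [:: ]; [:: 0]; [:: ]; [:: 0]; [:: ]; [:: 0]; [:: 2]; [:: 2; 0]; [:: ]; [:: 0]; [:: ]; [:: 0]; [:: ]; [:: 0]; [:: 2]; [:: 2; 0]; [:: ]; [:: 0]; [:: 2]; [:: 2; 0]; [:: ]; [:: 0]; [:: ]; [:: 0]; [:: ]; [:: 0]; [:: 2]; [:: 2; 0]; [:: ]; [:: 0]; [:: 2]; [:: 2; 0]; [:: 2]; [:: 2; 0]; [:: ]; [:: 0]; [:: ]; [:: 0]; [:: ]; [:: 0]; [:: ]; [:: 0]; [:: 2]; [:: 2; 0]; [:: ]; [:: 0]; [:: 2]; [:: 2; 0]; [:: 2]; [:: 2; 0]; [:: 2]; [:: 2; 0]; [:: ]; [:: 0]; [:: 2]; [:: 2; 0]; [:: 2]; [:: 2; 0]; [:: ]; [:: 0]; [:: 2]; [:: 2; 0]; [:: ]; [:: 0]; [:: ]; [:: 0]; [:: 2]; [:: 2; 0]; [:: 2]; [:: 2; 0]; [:: 2]; [:: 2; 0]; [:: 2]; [:: 2; 0]; [:: ]; [:: 0]; [:: 2]; [:: 2; 0]; [:: 2]; [:: 2; 0]; [:: 2]; [:: 2; 0]; [:: 2]; [:: 2; 0]].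
Definition fword_t : seq (seq nat) := [:: [:: ]; [:: 0]; [:: 1]; [:: 0; 1]; [:: 1; 0]; [:: 0; 1; 0]; [:: ]; [:: 0]; [:: 1]; [:: 0; 1]; [:: 1; 0]; [:: 0; 1; 0]; [:: ]; [:: 0]; [:: 1]; [:: 0; 1]; [:: 1; 0]; [:: 0; 1; 0]; [:: ]; [:: 0]; [:: 1]; [:: 0; 1]; [:: 1; 0]; [:: 0; 1; 0]; [:: ]; [:: 0]; [:: 1]; [:: 0; 1]; [:: 1; 0]; [:: 0; 1; 0]; [:: ]; [:: 0]; [:: 1]; [:: 0; 1]; [:: 1; 0]; [:: 0; 1; 0]; [:: ]; [:: 0]; [:: 1]; [:: 0; 1]; [:: 1; 0]; [:: 0; 1; 0]; [:: ]; [:: 0]; [:: 1]; [:: 0; 1]; [:: 1; 0]; [:: 0; 1; 0]; [:: ]; [:: 0]; [:: 1]; [:: 0; 1]; [:: 1; 0]; [:: 0; 1; 0]; [:: ]; [:: 0]; [:: 1]; [:: 0; 1]; [:: 1; 0]; [:: 0; 1; 0]; [:: ]; [:: 0]; [:: 1]; [:: 0; 1]; [:: 1; 0]; [:: 0; 1; 0]; [:: ]; [:: 0]; [:: 1]; [:: 0; 1]; [:: 1; 0]; [:: 0; 1; 0]; [:: ]; [:: 0]; [:: 1]; [:: 0; 1]; [:: 1; 0]; [:: 0; 1; 0]; [:: ]; [:: 0]; [:: 1]; [:: 0; 1]; [:: 1; 0]; [:: 0; 1; 0]].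
Definition gword_t : seq (seq nat) := [:: [:: ]; [:: 0]; [:: 1]; [:: 0; 1]; [:: 1; 0]; [:: 0; 1; 0]; [:: 2]; [:: 2; 0]; [:: 1; 2]; [:: 0; 1; 2]; [:: 1; 2; 0]; [:: 0; 1; 2; 0]; [:: 1; 2; 1]; [:: 0; 1; 2; 1]; [:: 2; 1]; [:: 2; 0; 1]; [:: 0; 1; 2; 0; 1]; [:: 1; 2; 0; 1]; [:: 2; 1; 2; 1]; [:: 2; 0; 1; 2; 1]; [:: 1; 2; 1; 2; 1]; [:: 0; 1; 2; 1; 2; 1]; [:: 1; 2; 0; 1; 2; 1]; [:: 0; 1; 2; 0; 1; 2; 1]; [:: 1; 2; 1; 2]; [:: 0; 1; 2; 1; 2]; [:: 2; 1; 2]; [:: 2; 0; 1; 2]; [:: 0; 1; 2; 0; 1; 2]; [:: 1; 2; 0; 1; 2]; [:: 2; 1; 2; 1; 2]; [:: 2; 0; 1; 2; 1; 2]; [:: 2; 1; 2; 1; 2; 1]; [:: 2; 0; 1; 2; 1; 2; 1]; [:: 1; 2; 0; 1; 2; 1; 2]; [:: 1; 2; 0; 1; 2; 1; 2; 1]; [:: 1; 2; 1; 2; 1; 0]; [:: 0; 1; 2; 1; 2; 1; 0]; [:: 2; 1; 2; 1; 0]; [:: 2; 0; 1; 2; 1; 0]; [:: 0; 1; 2; 0; 1; 2; 1; 0]; [:: 1; 2; 0; 1; 2; 1; 0]; [:: 2; 1; 2; 1; 2; 1; 0]; [:: 2; 0; 1; 2; 1; 2; 1; 0]; [:: 2; 1;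 2; 1; 2; 0]; [:: 2; 0; 1; 2; 1; 2; 0]; [:: 2; 1; 2; 0; 1; 2; 1]; [:: 1; 2; 0; 1; 2; 1; 2; 0]; [:: 2; 1; 0]; [:: 2; 0; 1; 0]; [:: 1; 2; 1; 0]; [:: 0; 1; 2; 1; 0]; [:: 1; 2; 0; 1; 0]; [:: 0; 1; 2; 0; 1; 0]; [:: 2; 1; 2; 0]; [:: 2; 0; 1; 2; 0]; [:: 1; 2; 1; 2; 0]; [:: 0; 1; 2; 1; 2; 0]; [:: 1; 2; 0; 1; 2; 0]; [:: 0; 1; 2; 0; 1; 2; 0]; [:: 2; 0; 1; 2; 0; 1]; [:: 2; 1; 2; 0; 1]; [:: 1; 2; 0; 1; 2; 0; 1]; [:: 0; 1; 2; 0; 1; 2; 0; 1]; [:: 1; 2; 1; 2; 0; 1]; [:: 0; 1; 2; 1; 2; 0; 1]; [:: 2; 0; 1; 2; 0; 1; 2; 1; 0]; [:: 2; 1; 2; 0; 1; 2; 1; 0]; [:: 2; 1; 2; 0; 1; 2; 0; 1]; [:: 1; 2; 1; 2; 0; 1; 2]; [:: 2; 0; 1; 2; 0; 1; 2]; [:: 2; 1; 2; 0; 1; 2]; [:: 2; 1; 2; 0; 1; 0]; [:: 2; 0; 1; 2; 0; 1; 0]; [:: 1; 2; 1; 2; 0; 1; 0]; [:: 0; 1; 2; 1; 2; 0; 1; 0]; [:: 1; 2; 0; 1; 2; 0; 1; 0]; [:: 0; 1; 2; 0; 1; 2; 0; 1; 0]; [:: 2; 1; 2; 1; 2; 0; 1];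 [:: 1; 2; 1; 2; 0; 1; 2; 0]; [:: 2; 1; 2; 1; 2; 0; 1; 0]; [:: 2; 0; 1; 2; 1; 2; 0; 1; 0]; [:: 2; 1; 2; 0; 1; 2; 0]; [:: 2; 0; 1; 2; 0; 1; 2; 0]].
Definition taua_t : seq nat := [:: 5; 5; 49; 3; 3; 15; 4; 4; 48; 1; 1; 7; 2; 2; 14; 0; 0; 6; 5; 49; 49; 3; 15; 15; 72; 52; 52; 74; 80; 80; 61; 17; 17; 64; 78; 78; 38; 50; 50; 36; 42; 42; 4; 48; 48; 1; 7; 7; 56; 44; 44; 54; 10; 10; 38; 38; 50; 36; 36; 42; 39; 39; 51; 41; 41; 67; 37; 37; 43; 40; 40; 66; 73; 73; 53; 76; 76; 34; 72; 72; 52; 74; 74; 80; 77; 77; 35; 75; 75; 81; 73; 53; 53; 76; 34; 34; 39; 51; 51; 41; 67; 67; 25; 31; 31; 28; 70; 70; 19; 19; 13; 22; 22; 46; 18; 18; 12; 20; 20; 32; 23; 23; 47; 21; 21; 33; 19; 13; 13; 22; 46; 46; 60; 16; 16; 62; 68; 68; 37; 43; 43; 40; 66; 66; 2; 14; 14; 0; 6; 6; 18; 12; 12; 20; 32; 32; 26; 8; 8; 24; 30; 30; 61; 61; 17; 64; 64; 78; 60; 60; 16; 62; 62; 68; 65; 65; 79; 63; 63; 69; 56; 56; 44; 54; 54; 10; 57; 57; 45; 59; 59; 83; 55; 55; 11; 58; 58; 82; 23; 47; 47; 21; 33; 33; 57; 45; 45; 59; 83; 83; 77; 35; 35; 75;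 81; 81; 26; 26; 8; 24; 24; 30; 27; 27; 9; 29; 29; 71; 25; 25; 31; 28; 28; 70; 55; 11; 11; 58; 82; 82; 27; 9; 9; 29; 71; 71; 65; 79; 79; 63; 69; 69].
Definition taui_t : seq nat := [:: 1; 0; 0; 1; 0; 0; 1; 0; 0; 1; 0; 0; 1; 0; 0; 1; 0; 0; 2; 2; 1; 2; 2; 1; 2; 2; 1; 2; 2; 1; 2; 2; 1; 2; 2; 1; 2; 2; 1; 2; 2; 1; 2; 2; 1; 2; 2; 1; 2; 2; 1; 2; 2; 1; 1; 0; 0; 1; 0; 0; 1; 0; 0; 1; 0; 0; 1; 0; 0; 1; 0; 0; 1; 0; 0; 1; 0; 0; 1; 0; 0; 1; 0; 0; 1; 0; 0; 1; 0; 0; 2; 2; 1; 2; 2; 1; 2; 2; 1; 2; 2; 1; 2; 2; 1; 2; 2; 1; 1; 0; 0; 1; 0; 0; 1; 0; 0; 1; 0; 0; 1; 0; 0; 1; 0; 0; 2; 2; 1; 2; 2; 1; 2; 2; 1; 2; 2; 1; 2; 2; 1; 2; 2; 1; 2; 2; 1; 2; 2; 1; 2; 2; 1; 2; 2; 1; 2; 2; 1; 2; 2; 1; 1; 0; 0; 1; 0; 0; 1; 0; 0; 1; 0; 0; 1; 0; 0; 1; 0; 0; 1; 0; 0; 1; 0; 0; 1; 0; 0; 1; 0; 0; 1; 0; 0; 1; 0; 0; 2; 2; 1; 2; 2; 1; 2; 2; 1; 2; 2; 1; 2; 2; 1; 2; 2; 1; 1; 0; 0; 1; 0; 0; 1;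 0; 0; 1; 0; 0; 1; 0; 0; 1; 0; 0; 2; 2; 1; 2; 2; 1; 2; 2; 1; 2; 2; 1; 2; 2; 1; 2; 2; 1].

Definition nb (i a : nat) : nat := nth 0 (nth [::] btab i) a.
Definition nvo (i a : nat) : int := nth (0:int) (nth [::] vtab i) a.
Definition nbv (a : nat) : nat := nth 0 bvn_t a.
Definition nbe (a : nat) : nat := nth 0 be_t a.
Definition nbf (a : nat) : nat := nth 0 bfn_t a.
Definition neo (a : nat) : int := nth (0:int) eoff_t a.
Definition nfo (a : nat) : int := nth (0:int) foff_t a.
Definition ncol (a : nat) : bool := nth false col_t a.
Definition nvc (j : nat) : nat := nth 0 vcanon_t j.
Definition nec (j : nat) : nat := nth 0 ecanon_t j.
Definition nfc (j : nat) : nat := nth 0 fcanon_t j.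
Definition vword (a : nat) : seq nat := nth [::] vword_t a.
Definition eword (a : nat) : seq nat := nth [::] eword_t a.
Definition fword (a : nat) : seq nat := nth [::] fword_t a.
Definition gword (a : nat) : seq nat := nth [::] gword_t a.
Definition nwalk (w : seq nat) (a : nat) : nat := foldl (fun a i => nb i a) a w.
Fixpoint nsum (w : seq nat) (a : nat) : int :=
  if w is i :: w' then (nvo i a + nsum w' (nb i a))%R else 0%R.
Definition hloop : seq nat := [:: 1; 2; 1; 2; 1; 2; 1; 2; 1; 2; 1; 2].
Definition floop : seq nat := [:: 0; 1; 0; 1; 0; 1].
Definition ntau (z : nat * nat) : nat * nat :=
  (nth 0 taua_t (3 * z.1 + z.2), nth 0 taui_t (3 * z.1 + z.2)).
Definition ntb (j : nat) (z : nat * nat) : nat * nat :=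
  let: (a, i) := z in
  if j == 0 then (if i == 0 then (nb 0 a, i) else (nb 1 a, i))
  else if j == 1 then (if i == 0 then (a, 1) else if i == 1 then (a, 0) else (nb 2 a, 2))
  else (if i == 0 then (nb 2 a, 0) else if i == 1 then (a, 2) else (a, 1)).
Definition ntv (j : nat) (z : nat * nat) : int :=
  let: (a, i) := z in
  if j == 0 then (if i == 0 then nvo 0 a else nvo 1 a)
  else if j == 1 then (if i == 2 then nvo 2 a else 0)
  else (if i == 0 then nvo 2 a else 0).
Definition I84 := iota 0 84.
Definition allF (P : nat -> bool) := all P I84.
Definition inc (u t : nat) := has (fun a => (nbv a == u) && (nbf a == t)) I84.

Definition K1 := allF (fun a => all (fun i => [&& nb i a < 84, nb i (nb i a) == a, nb i a != a & (nvo i (nb i a) == - nvo i a)%R]) (iota 0 3)).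
Definition K2 := allF (fun a => [&& nb 0 (nb 2 a) == nb 2 (nb 0 a), nb 0 (nb 2 a) != a &
   (nvo 2 a + nvo 0 (nb 2 a) == nvo 0 a + nvo 2 (nb 0 a))%R]).
Definition K3 := allF (fun a => all (fun i => ncol (nb i a) == ~~ ncol a) (iota 0 3)).
Definition K4 := allF (fun a => [&& nbv a < 7, nbe a < 21, nbf a < 14,
   all (fun i => (nbv (nb i a) == nbv a) && ((nbv a != 0) ==> (nvo i a == 0))) [:: 1; 2],
   all (fun i => (nbe (nb i a) == nbe a) && (neo (nb i a) == neo a + nvo i a)%R) [:: 0; 2] &
   all (fun i => (nbf (nb i a) == nbf a) && ((nbf a != 0) ==> (nfo (nb i a) == nfo a + nvo i a)%R)) [:: 0; 1]]).
Definition K5 := allF (fun a => [&&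
   all (fun i => (i == 1) || (i == 2)) (vword a), nwalk (vword a) a == nvc (nbv a),
   all (fun i => (i == 0) || (i == 2)) (eword a), nwalk (eword a) a == nec (nbe a),
   all (fun i => (i == 0) || (i == 1)) (fword a), nwalk (fword a) a == nfc (nbf a),
   all (fun i => i < 3) (gword a) & nwalk (gword a) a == 0]).
Definition K5b := [&& all (fun j => (nvc j < 84) && (nbv (nvc j) == j)) (iota 0 7),
   all (fun j => [&& nec j < 84, nbe (nec j) == j & neo (nec j) == 0]) (iota 0 21),
   all (fun j => [&& nfc j < 84, nbf (nfc j) == j & nfo (nfc j) == 0]) (iota 0 14),
   nvc 0 == 0, nwalk hloop 0 == 0, nsum hloop 0 == 1, nfc 0 == 48, nwalk floop 48 == 48 & nsum floop 48 == 1].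
Definition K7 := allF (fun a => (nbv (nb 0 a) != nbv a) && allF (fun a' =>
   ((nbv a == nbv a') && (nbv (nb 0 a) == nbv (nb 0 a'))) ==>
   ((nbe a == nbe a') && ((nbv a != 0) ==> (neo a == neo a'))))).
Definition K9b := allF (fun a => allF (fun a' =>
   [&& nbf a == nbf a', nbf a != 0, nbv a == nbv a' & nbv a != 0] ==> (nfo a == nfo a'))).
Definition incT : seq (seq bool) := [seq [seq inc u t | t <- iota 0 14] | u <- iota 0 7].
Definition K9 := let T := incT in let inc' u t := nth false (nth [::] T u) t in
   all (fun u1 => all (fun u2 => all (fun t1 => all (fun t2 =>
   [&& u1 != u2, t1 != t2, inc' u1 t1, inc' u1 t2, inc' u2 t1 & inc' u2 t2] ==>
   has (fun a => [&& nbv a == u1, nbv (nb 0 a) == u2, nbf a == t1 & nbf (nb 2 a) == t2]) I84)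
   (iota 0 14)) (iota 0 14)) (iota 0 7)) (iota 0 7).
Definition K8 := all (fun p => has (fun a => (nbv a == p.+1) && (nbv (nb 0 a) == 0)) I84 &&
   all (fun p' => ((p != p') && ~~ (((p == 0) && (p' == 2)) || ((p == 2) && (p' == 0)))) ==>
      has (fun a => [&& nbv a == p.+1, nbv (nb 0 a) == p'.+1 & nvo 0 a == 0]) I84) (iota 0 6)) (iota 0 6)
   && has (fun a => [&& nbv a == 1, nbv (nb 0 a) == 3 & nvo 0 a == 1]) I84.
Definition K10 := allF (fun a => all (fun i => [&& (ntau (a, i)).1 < 84, (ntau (a, i)).2 < 3,
   ntau (ntau (a, i)) == (a, i) &
   all (fun j => (ntau (ntb j (a, i)) == ntb j (ntau (a, i))) && (ntv j (ntau (a, i)) == - ntv j (a, i))%R) (iota 0 3)]) (iota 0 3))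
   && ((ntau (0, 0)).2 != 0).

Lemma K1_ok : K1. Proof. Time vm_compute. reflexivity. Qed.
Lemma K2_ok : K2. Proof. vm_compute. reflexivity. Qed.
Lemma K3_ok : K3. Proof. vm_compute. reflexivity. Qed.
Lemma K4_ok : K4. Proof. vm_compute. reflexivity. Qed.
Lemma K5_ok : K5. Proof. vm_compute. reflexivity. Qed.
Lemma K5b_ok : K5b. Proof. vm_compute. reflexivity. Qed.
Lemma K7_ok : K7. Proof. Time vm_compute. reflexivity. Qed.
Lemma K9b_ok : K9b. Proof. vm_compute. reflexivity. Qed.
Lemma K9_ok : K9. Proof. Time vm_compute. reflexivity. Qed.
Lemma K8_ok : K8. Proof. vm_compute. reflexivity. Qed.
Lemma K10_ok : K10. Proof. Time vm_compute. reflexivity. Qed.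
Definition K11 := allF (fun a => all (fun i => all (fun j => ((ntb j (a, i)).1 < 84) && ((ntb j (a, i)).2 < 3)) (iota 0 3)) (iota 0 3)).
Lemma K11_ok : K11. Proof. vm_compute. reflexivity. Qed.

Lemma allF_ord (P : pred nat) : allF P -> forall a : 'I_84, P a.
Proof. by move=> /allP H a; apply: H; rewrite mem_iota add0n ltn_ord. Qed.

Lemma nb_lt i (a : 'I_84) : nb i a < 84.
Proof.
case: (ltnP i 3) => Hi.
  move: (allF_ord K1_ok a) => /allP /(_ i); rewrite mem_iota Hi => /(_ isT).
  by case/and4P.
by rewrite /nb (nth_default [::]) ?nth_nil.
Qed.

Section Cover.
Variable n : nat.
Local Notation Z := 'I_n.+1.
Local Notation bF := 'I_84.
Definition D := ('I_n.+1 * 'I_84)%type.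

Definition io (z : int) : Z := (Zp1 *~ z)%R.
Lemma ioD x y : io (x + y) = (io x + io y)%R. Proof. exact: mulrzDr. Qed.
Lemma ioN x : io (- x) = (- io x)%R. Proof. exact: mulrNz. Qed.
Lemma io0 : io 0 = 0%R. Proof. by []. Qed.

Definition bb i (a : bF) : bF := inord (nb i a).
Arguments bb : simpl never.
Lemma val_bb i a : nat_of_ord (bb i a) = nb i a. Proof. by rewrite /bb inordK // nb_lt. Qed.

Definition R i (x : D) : D := (x.1 + io (nvo i x.2), bb i x.2)%R.

Definition walk (w : seq nat) (x : D) : D := foldl (fun x i => R i x) x w.
Lemma walkE w (x : D) : walk w x = (x.1 + io (nsum w x.2), inord (nwalk w x.2))%R.
Proof.
elim: w x => [|i w IH] [k a] /=; first by rewrite addr0 inord_val.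
by rewrite IH /= val_bb ioD addrA.
Qed.

Lemma walk_conn (e : rel D) (L : pred nat) w x :
  (forall i y, L i -> e y (R i y)) -> all L w -> connect e x (walk w x).
Proof.
move=> HL; elim: w x => [|i w IH] x /=; first by rewrite connect0.
by case/andP=> Li Lw; apply: connect_trans (connect1 (HL i x Li)) (IH _ Lw).
Qed.


Lemma val_io m : nat_of_ord (io (Posz m)) = m %% n.+1.
Proof. by rewrite /io -pmulrn Zp_mulrn /= modnMml mul1n. Qed.

Lemma ord_io (k : Z) : k = io (Posz k).
Proof. by apply: val_inj; rewrite /= val_io modn_small. Qed.

Lemma io_neq0 m : 0 < m < n.+1 -> io (Posz m) != 0%R.
Proof.
case/andP=> m0 mn; apply/eqP => /(congr1 (@nat_of_ord _)); rewrite val_io modn_small //=.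
by move=> E; rewrite E in m0.
Qed.

Lemma ioS m : io (Posz m.+1) = (io (Posz m) + io 1)%R.
Proof. by rewrite -ioD -(PoszD m 1) addn1. Qed.

Lemma RR i x : i < 3 -> R i (R i x) = x.
Proof.
case: x => k a Hi; rewrite /R /=.
move: (allF_ord K1_ok a) => /allP /(_ i); rewrite mem_iota Hi => /(_ isT).
case/and4P=> _ /eqP h1 _ /eqP h2.
rewrite val_bb h2 ioN addrK; congr (_, _); apply: val_inj => /=; by rewrite !val_bb h1.
Qed.

Lemma R_neq i x : i < 3 -> R i x != x.
Proof.
case: x => k a Hi; rewrite /R /=.
move: (allF_ord K1_ok a) => /allP /(_ i); rewrite mem_iota Hi => /(_ isT).
case/and4P=> _ _ h _; apply/negP => /eqP [] _ /(congr1 (@nat_of_ord _)).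
by rewrite val_bb => E; rewrite E eqxx in h.
Qed.

Lemma conn_lab (T : eqType) (lab : D -> T) (e : rel D) :
  (forall x y, e x y -> lab y = lab x) -> forall x y, connect e x y -> lab y = lab x.
Proof.
move=> Hinv x y /connectP [p]; elim: p x => [|z p IH] x /=; first by move=> _ ->.
by case/andP=> Hxz Hp Hy; rewrite (IH z Hp Hy) (Hinv _ _ Hxz).
Qed.

Lemma lab_conn (T : eqType) (lab : D -> T) (e : rel D) (word : bF -> seq nat) (L : pred nat) :
  (forall i y, L i -> e y (R i y)) ->
  (forall x y, e x y -> lab y = lab x) ->
  symmetric e ->
  (forall a, all L (word a)) ->
  (forall x y, lab x = lab y -> (walk (word x.2) x).2 = (walk (word y.2) y).2) ->
  (forall x k1 k2, let c := (walk (word x.2) x).2 in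
       lab (k1, c) = lab (k2, c) -> connect e (k1, c) (k2, c)) ->
  forall x y, lab x = lab y -> connect e x y.
Proof.
move=> HL Hinv Hsym Hw Hc Hf x y Hxy.
have HX := walk_conn x HL (Hw x.2); have HY := walk_conn y HL (Hw y.2).
have LX := conn_lab Hinv HX; have LY := conn_lab Hinv HY.
have EC := Hc _ _ Hxy.
have HF := Hf x (walk (word x.2) x).1 (walk (word y.2) y).1.
move: HX HY LX LY EC HF.
case: (walk (word x.2) x) => k1 c1; case: (walk (word y.2) y) => k2 c2 /= HX HY LX LY EC; subst c2.
move=> HF; apply: connect_trans HX _; apply: connect_trans (HF _) _.
  by rewrite LX LY.
by rewrite (sym_connect_sym Hsym).
Qed.

Lemma loop_conn (e : rel D) c :
  (forall k, connect e (k, c) (k + io 1, c)%R) -> forall k1 k2, connect e (k1, c) (k2, c).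
Proof.
move=> H.
have Hm : forall m k, connect e (k, c) (k + io (Posz m), c)%R.
  elim=> [|m IH] k; first by rewrite io0 addr0 connect0.
  by rewrite ioS addrA; exact: connect_trans (IH k) (H _).
move=> k1 k2; have := Hm (k2 - k1)%R k1.
by rewrite -ord_io addrC subrK.
Qed.

Lemma Req i x y : i < 3 -> (y == R i x) = (x == R i y).
Proof. by move=> Hi; apply/eqP/eqP => ->; rewrite RR. Qed.

End Cover.

Lemma K4_rng (a : 'I_84) : [/\ nbv a < 7, nbe a < 21 & nbf a < 14].
Proof. by case/and5P: (allF_ord K4_ok a) => -> -> ->. Qed.
Lemma K4_v (a : 'I_84) i : i \in [:: 1; 2] -> nbv (nb i a) = nbv a /\ (nbv a != 0 -> nvo i a = 0%R).
Proof.
case/and5P: (allF_ord K4_ok a) => _ _ _ /allP h4 _ Hi.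
by case/andP: (h4 i Hi) => /eqP -> /implyP H; split => // /H /eqP.
Qed.
Lemma K4_e (a : 'I_84) i : i \in [:: 0; 2] -> nbe (nb i a) = nbe a /\ neo (nb i a) = (neo a + nvo i a)%R.
Proof.
case/and5P: (allF_ord K4_ok a) => _ _ _ _ /andP[/allP h5 _] Hi.
by case/andP: (h5 i Hi) => /eqP -> /eqP ->.
Qed.
Lemma K4_f (a : 'I_84) i : i \in [:: 0; 1] -> nbf (nb i a) = nbf a /\ (nbf a != 0 -> nfo (nb i a) = (nfo a + nvo i a)%R).
Proof.
case/and5P: (allF_ord K4_ok a) => _ _ _ _ /andP[_ /allP h6] Hi.
by case/andP: (h6 i Hi) => /eqP -> /implyP H; split => // /H /eqP.
Qed.

Lemma K5_at (a : 'I_84) :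
  [/\ all (fun i => (i == 1) || (i == 2)) (vword a) /\ nwalk (vword a) a = nvc (nbv a),
      all (fun i => (i == 0) || (i == 2)) (eword a) /\ nwalk (eword a) a = nec (nbe a),
      all (fun i => (i == 0) || (i == 1)) (fword a) /\ nwalk (fword a) a = nfc (nbf a)
    & all (fun i => i < 3) (gword a) /\ nwalk (gword a) a = 0].
Proof.
by case/and5P: (allF_ord K5_ok a) => h1 /eqP h2 h3 /eqP h4 /and4P[h5 /eqP h6 h7 /eqP h8].
Qed.

Lemma nvc_ok j : j < 7 -> nvc j < 84 /\ nbv (nvc j) = j.
Proof.
move: K5b_ok => /and3P[/allP H _ _] Hj.
by case/andP: (H j ltac:(by rewrite mem_iota)) => ? /eqP.
Qed.
Lemma nec_ok j : j < 21 -> [/\ nec j < 84, nbe (nec j) = j & neo (nec j) = 0%R].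
Proof.
move: K5b_ok => /and3P[_ /allP H _] Hj.
by case/and3P: (H j ltac:(by rewrite mem_iota)) => ? /eqP ? /eqP.
Qed.
Lemma nfc_ok j : j < 14 -> [/\ nfc j < 84, nbf (nfc j) = j & nfo (nfc j) = 0%R].
Proof.
move: K5b_ok => /and3P[_ _ /and3P[/allP H _ _]] Hj.
by case/and3P: (H j ltac:(by rewrite mem_iota)) => ? /eqP ? /eqP.
Qed.
Lemma loops1 : [/\ nvc 0 = 0, nwalk hloop 0 = 0 & nsum hloop 0 = 1%R].
Proof. by []. Qed.
Lemma loops2 : [/\ nfc 0 = 48, nwalk floop 48 = 48 & nsum floop 48 = 1%R].
Proof. by []. Qed.

Arguments R {n}. Arguments io {n}. Arguments walk {n}.

Lemma inord_inj m j j' : j < m.+1 -> j' < m.+1 -> inord j = inord j' :> 'I_m.+1 -> j = j'.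
Proof. by move=> h h' /(congr1 (@nat_of_ord _)); rewrite !inordK. Qed.

Section Lab.
Variable n : nat.
Local Notation Z := 'I_n.+1.
Local Notation D := (D n).
Local Notation VR := (vrel (@R n 1) (@R n 2)).
Local Notation ER := (erel (@R n 0) (@R n 2)).
Local Notation FR := (Defs.frel (@R n 0) (@R n 1)).

Lemma walk_pair w (k : Z) a : walk w ((k, a) : D) = (k + io (nsum w a), inord (nwalk w a))%R.
Proof. exact: walkE. Qed.

Definition vl (x : D) : option (Z * 'I_6) := if nbv x.2 is j.+1 then Some (x.1, inord j) else None.
Definition el (x : D) : Z * 'I_21 := (x.1 - io (neo x.2), inord (nbe x.2))%R.
Definition fl (x : D) : option (Z * 'I_13) :=
  if nbf x.2 is j.+1 then Some (x.1 - io (nfo x.2), inord j)%R else None.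

Lemma vl_R i (x : D) : i \in [:: 1; 2] -> vl (R i x) = vl x.
Proof.
case: x => k a Hi; rewrite /vl /R /= val_bb; case: (K4_v a Hi) => -> H.
by case E: (nbv a) => [|j] //; rewrite H ?E // io0 addr0.
Qed.

Lemma el_R i (x : D) : i \in [:: 0; 2] -> el (R i x) = el x.
Proof.
case: x => k a Hi; rewrite /el /R /= val_bb; case: (K4_e a Hi) => -> ->.
by rewrite ioD (addrC (io (neo a))) addrKA.
Qed.

Lemma fl_R i (x : D) : i \in [:: 0; 1] -> fl (R i x) = fl x.
Proof.
case: x => k a Hi; rewrite /fl /R /= val_bb; case: (K4_f a Hi) => -> H.
by case E: (nbf a) => [|j] //; rewrite H ?E // ioD (addrC (io (nfo a))) addrKA.
Qed.

Lemma vl_bv (x y : D) : vl x = vl y -> nbv x.2 = nbv y.2.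
Proof.
case: (K4_rng x.2) (K4_rng y.2) => hx _ _ [hy _ _].
rewrite /vl; case: (nbv x.2) hx => [|j] hx; case: (nbv y.2) hy => [|j'] hy //.
by case=> _ /inord_inj ->.
Qed.

Lemma fl_bf (x y : D) : fl x = fl y -> nbf x.2 = nbf y.2.
Proof.
case: (K4_rng x.2) (K4_rng y.2) => _ _ hx [_ _ hy].
rewrite /fl; case: (nbf x.2) hx => [|j] hx; case: (nbf y.2) hy => [|j'] hy //.
by case=> _ /inord_inj ->.
Qed.

Lemma el_be (x y : D) : el x = el y -> nbe x.2 = nbe y.2.
Proof.
case: (K4_rng x.2) (K4_rng y.2) => _ hx _ [_ hy _].
by rewrite /el; case=> _ /inord_inj ->.
Qed.

Lemma VR_sym : symmetric VR.
Proof. by move=> x y; rewrite /vrel (Req (i:=1)) // (Req (i:=2)). Qed.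
Lemma ER_sym : symmetric ER.
Proof. by move=> x y; rewrite /erel (Req (i:=0)) // (Req (i:=2)). Qed.
Lemma FR_sym : symmetric FR.
Proof. by move=> x y; rewrite /Defs.frel (Req (i:=0)) // (Req (i:=1)). Qed.

Lemma VR_step i (y : D) : (i == 1) || (i == 2) -> VR y (R i y).
Proof. by case/orP=> /eqP->; rewrite /vrel eqxx ?orbT. Qed.
Lemma ER_step i (y : D) : (i == 0) || (i == 2) -> ER y (R i y).
Proof. by case/orP=> /eqP->; rewrite /erel eqxx ?orbT. Qed.
Lemma FR_step i (y : D) : (i == 0) || (i == 1) -> FR y (R i y).
Proof. by case/orP=> /eqP->; rewrite /Defs.frel eqxx ?orbT. Qed.

Lemma VR_inv (x y : D) : VR x y -> vl y = vl x.
Proof. by case/orP=> /eqP->; apply: vl_R. Qed.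
Lemma ER_inv (x y : D) : ER x y -> el y = el x.
Proof. by case/orP=> /eqP->; apply: el_R. Qed.
Lemma FR_inv (x y : D) : FR x y -> fl y = fl x.
Proof. by case/orP=> /eqP->; apply: fl_R. Qed.

Lemma vl_connE (x y : D) : vl x = vl y -> connect VR x y.
Proof.
apply: (@lab_conn n _ vl VR vword (fun i => (i == 1) || (i == 2))).
- exact: VR_step.
- exact: VR_inv.
- exact: VR_sym.
- by move=> a; case: (K5_at a) => [[]].
- move=> x0 y0 /vl_bv E; rewrite !walkE /=.
  by case: (K5_at x0.2) (K5_at y0.2) => [[_ ->] _ _ _] [[_ ->] _ _ _]; rewrite E.
- move=> x0 k1 k2 /=; rewrite walkE /=; case: (K5_at x0.2) => [[_ ->] _ _ _].
  case: (K4_rng x0.2) => Hv _ _.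
  case E: (nbv x0.2) Hv => [|j] Hv.
    have -> : nvc 0 = 0 by [].
    move=> _; apply: loop_conn => k.
    have H := walk_conn ((k, inord 0) : D) (@VR_step) (isT : all (fun i => (i == 1) || (i == 2)) hloop).
    move: H; rewrite walk_pair (inordK (isT : 0 < 84)).
    by case: loops1 => _ -> ->.
  case: (nvc_ok Hv) => h1 h2.
  by rewrite /vl /= inordK // h2 => -[->]; exact: connect0.
Qed.


Lemma subIr_Z (k1 k2 u : Z) : (k1 - u = k2 - u)%R -> k1 = k2.
Proof. exact: addIr. Qed.

Lemma el_connE (x y : D) : el x = el y -> connect ER x y.
Proof.
apply: (@lab_conn n _ el ER eword (fun i => (i == 0) || (i == 2))).
- exact: ER_step.
- exact: ER_inv.
- exact: ER_sym.
- by move=> a; case: (K5_at a) => _ [].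
- move=> x0 y0 /el_be E; rewrite !walkE /=.
  by case: (K5_at x0.2) (K5_at y0.2) => _ [_ ->] _ _ [_ [_ ->] _ _]; rewrite E.
- move=> x0 k1 k2 c /(congr1 fst) H.
  have -> : k1 = k2 by apply: (@subIr_Z _ _ (io (neo c))); exact: H.
  exact: connect0.
Qed.

Lemma fl_connE (x y : D) : fl x = fl y -> connect FR x y.
Proof.
apply: (@lab_conn n _ fl FR fword (fun i => (i == 0) || (i == 1))).
- exact: FR_step.
- exact: FR_inv.
- exact: FR_sym.
- by move=> a; case: (K5_at a) => _ _ [].
- move=> x0 y0 /fl_bf E; rewrite !walkE /=.
  by case: (K5_at x0.2) (K5_at y0.2) => _ _ [_ ->] _ [_ _ [_ ->] _]; rewrite E.
- move=> x0 k1 k2 /=; rewrite walkE /=; case: (K5_at x0.2) => _ _ [_ ->] _.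
  case: (K4_rng x0.2) => _ _ Hf.
  case E: (nbf x0.2) Hf => [|j] Hf.
    have -> : nfc 0 = 48 by [].
    move=> _; apply: loop_conn => k.
    have H := walk_conn ((k, inord 48) : D) (@FR_step) (isT : all (fun i => (i == 0) || (i == 1)) floop).
    move: H; rewrite walk_pair (inordK (isT : 48 < 84)).
    by case: loops2 => _ -> ->.
  case: (nfc_ok Hf) => h1 h2 _.
  rewrite /fl inordK // h2 => /(congr1 (fun o => if o is Some p then p.1 else 0%R)) H.
  have -> : k1 = k2 by apply: (@subIr_Z _ _ (io (nfo (nfc j.+1)))); exact: H.
  exact: connect0.
Qed.

Lemma vl_connP (x y : D) : reflect (vl x = vl y) (connect VR x y).
Proof. by apply: (iffP idP) => [/(conn_lab VR_inv) -> //|]; exact: vl_connE. Qed.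
Lemma el_connP (x y : D) : reflect (el x = el y) (connect ER x y).
Proof. by apply: (iffP idP) => [/(conn_lab ER_inv) -> //|]; exact: el_connE. Qed.
Lemma fl_connP (x y : D) : reflect (fl x = fl y) (connect FR x y).
Proof. by apply: (iffP idP) => [/(conn_lab FR_inv) -> //|]; exact: fl_connE. Qed.

Lemma in_vcls (x y : D) : (y \in vcls (@R n 1) (@R n 2) x) = (vl x == vl y).
Proof. by rewrite /vcls inE; apply/vl_connP/eqP. Qed.
Lemma in_ecls (x y : D) : (y \in ecls (@R n 0) (@R n 2) x) = (el x == el y).
Proof. by rewrite /ecls inE; apply/el_connP/eqP. Qed.
Lemma in_fcls (x y : D) : (y \in fcls (@R n 0) (@R n 1) x) = (fl x == fl y).
Proof. by rewrite /fcls inE; apply/fl_connP/eqP. Qed.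

Lemma vcls_eq (x y : D) : (vcls (@R n 1) (@R n 2) x == vcls (@R n 1) (@R n 2) y) = (vl x == vl y).
Proof.
apply/eqP/eqP => [E|E].
  by have := in_vcls x y; rewrite E in_vcls eqxx => /esym/eqP.
by apply/setP => z; rewrite !in_vcls E.
Qed.
Lemma ecls_eq (x y : D) : (ecls (@R n 0) (@R n 2) x == ecls (@R n 0) (@R n 2) y) = (el x == el y).
Proof.
apply/eqP/eqP => [E|E].
  by have := in_ecls x y; rewrite E in_ecls eqxx => /esym/eqP.
by apply/setP => z; rewrite !in_ecls E.
Qed.
Lemma fcls_eq (x y : D) : (fcls (@R n 0) (@R n 1) x == fcls (@R n 0) (@R n 1) y) = (fl x == fl y).
Proof.
apply/eqP/eqP => [E|E].
  by have := in_fcls x y; rewrite E in_fcls eqxx => /esym/eqP.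
by apply/setP => z; rewrite !in_fcls E.
Qed.

End Lab.

Lemma K2_at (a : 'I_84) : [/\ nb 0 (nb 2 a) = nb 2 (nb 0 a), nb 0 (nb 2 a) != a &
   (nvo 2 a + nvo 0 (nb 2 a) = nvo 0 a + nvo 2 (nb 0 a))%R].
Proof. by case/and3P: (allF_ord K2_ok a) => /eqP -> -> /eqP ->. Qed.

Lemma K3_at (a : 'I_84) i : i < 3 -> ncol (nb i a) = ~~ ncol a.
Proof.
move=> Hi; move: (allF_ord K3_ok a) => /allP /(_ i); rewrite mem_iota Hi => /(_ isT).
by move/eqP.
Qed.

Lemma K7_at (a a' : 'I_84) : nbv (nb 0 a) != nbv a /\
  (nbv a = nbv a' -> nbv (nb 0 a) = nbv (nb 0 a') -> nbe a = nbe a' /\ (nbv a != 0 -> neo a = neo a')).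
Proof.
case/andP: (allF_ord K7_ok a) => h1 /allP /(_ a') H; split => // e1 e2.
have := H ltac:(by rewrite mem_iota add0n ltn_ord); rewrite e1 e2 !eqxx /=.
by case/andP => /eqP -> /implyP h; split => // /h /eqP.
Qed.

Lemma card_cls (T L : finType) (cls : T -> {set T}) (lab : T -> L) :
  (forall x y, (y \in cls x) = (lab x == lab y)) -> (forall l, exists x, lab x = l) ->
  #|[set cls x | x : T]| = #|L|.
Proof.
move=> H surj.
have Ecls : forall x, cls x = [set y | lab y == lab x].
  by move=> x; apply/setP => y; rewrite inE H eq_sym.
have -> : [set cls x | x : T] = [set [set y | lab y == l] | l : L].
  apply/setP => S; apply/imsetP/imsetP => [[x _ ->]|[l _ ->]].
    by exists (lab x) => //; rewrite Ecls.
  by have [x Hx] := surj l; exists x => //; rewrite Ecls Hx.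
rewrite card_imset ?cardT ?size_enum_ord //.
move=> l1 l2 E; have [x Hx] := surj l1.
have : x \in [set y | lab y == l1] by rewrite inE Hx.
by rewrite E inE Hx => /eqP.
Qed.

Section Main.
Variable n : nat.
Local Notation Z := 'I_n.+1.
Local Notation D := (D n).
Local Notation r0 := (@R n 0).
Local Notation r1 := (@R n 1).
Local Notation r2 := (@R n 2).

Lemma r02 (x : D) : r0 (r2 x) = r2 (r0 x).
Proof.
case: x => k a; case: (K2_at a) => h1 _ h3.
rewrite /R /=; congr (_, _).
  by rewrite !val_bb -!addrA -!ioD h3.
by apply: val_inj => /=; rewrite !val_bb h1.
Qed.

Lemma r02_neq (x : D) : r0 (r2 x) != x.
Proof.
case: x => k a; case: (K2_at a) => _ h2 _.
apply/negP => /eqP [] _ /(congr1 (@nat_of_ord _)); rewrite !val_bb => E.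
by rewrite E eqxx in h2.
Qed.

Local Notation GR := (flag_rel r0 r1 r2).

Lemma GR_sym : symmetric GR.
Proof. by move=> x y; rewrite /flag_rel (Req (i:=0)) // (Req (i:=1)) // (Req (i:=2)). Qed.

Lemma GR_step i (y : D) : i < 3 -> GR y (R i y).
Proof. by case: i => [|[|[|]]] //= _; rewrite /flag_rel eqxx ?orbT. Qed.

Lemma GR_all (x : D) : connect GR x (0%R, inord 0).
Proof.
case: (K5_at x.2) => _ _ _ [Hw Hend].
apply: connect_trans (walk_conn x (@GR_step) Hw) _.
rewrite walkE Hend.
apply: loop_conn => k.
have H := walk_conn ((k, inord 0) : D) (@GR_step) (isT : all (fun i => i < 3) hloop).
by move: H; rewrite walk_pair (inordK (isT : 0 < 84)); case: loops1 => _ -> ->.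
Qed.

Lemma GR_conn (x y : D) : connect GR x y.
Proof. by apply: connect_trans (GR_all x) _; rewrite (sym_connect_sym GR_sym) GR_all. Qed.

Lemma main_is_map : is_map r0 r1 r2.
Proof.
split.
- by rewrite card_prod !card_ord.
- by split; [|split]; move=> x; split; [exact: RR|exact: R_neq|exact: RR|exact: R_neq|exact: RR|exact: R_neq].
- by move=> x; split; [exact: r02|exact: r02_neq].
- exact: GR_conn.
Qed.

Lemma main_orientable : orientable r0 r1 r2.
Proof.
exists (fun x : D => ncol x.2) => -[k a].
by split; rewrite /R /= val_bb K3_at.
Qed.

Lemma card_verts : #|verts r1 r2| = (n.+1 * 6).+1.
Proof.
rewrite /verts (@card_cls _ _ _ (@vl n)); first by rewrite card_option card_prod !card_ord.
  exact: in_vcls.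
case=> [[k p]|].
  have Hp : p.+1 < 7 by rewrite ltnS ltn_ord.
  exists (k, inord (nvc p.+1)); case: (nvc_ok Hp) => h1 h2.
  by rewrite /vl /= inordK // h2 inord_val.
by exists (0%R, inord 0); rewrite /vl /= inordK.
Qed.

Lemma card_edges : #|edges r0 r2| = n.+1 * 21.
Proof.
rewrite /edges (@card_cls _ _ _ (@el n)); first by rewrite card_prod !card_ord.
  exact: in_ecls.
case=> k q.
have Hq : q < 21 by [].
exists (k, inord (nec q)); case: (nec_ok Hq) => h1 h2 h3.
by rewrite /el /= inordK // h2 h3 io0 subr0 inord_val.
Qed.

Lemma card_faces : #|faces r0 r1| = (n.+1 * 13).+1.
Proof.
rewrite /faces (@card_cls _ _ _ (@fl n)); first by rewrite card_option card_prod !card_ord.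
  exact: in_fcls.
case=> [[k q]|].
  have Hq : q.+1 < 14 by rewrite ltnS ltn_ord.
  exists (k, inord (nfc q.+1)); case: (nfc_ok Hq) => h1 h2 h3.
  by rewrite /fl /= inordK // h2 h3 io0 subr0 inord_val.
by exists (0%R, inord 48); rewrite /fl /= inordK.
Qed.

Lemma main_genus : has_genus r0 r1 r2 n.+1.
Proof.
split; first exact: main_orientable.
have := card_verts; have := card_edges; have := card_faces.
rewrite /euler_char; lia.
Qed.

Lemma simple_aux (x y : D) : vl x = vl y -> vl (r0 x) = vl (r0 y) -> nbv x.2 != 0 -> el x = el y.
Proof.
case: x => k a; case: y => k' a' E1 E2 Hnz.
have e1 := vl_bv E1; have e2 := vl_bv E2.
move: e1 e2 => /= e1; rewrite !val_bb => e2.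
case: (K7_at a a') => _ /(_ e1 e2) [h1 /(_ Hnz) h2].
move: E1; rewrite /vl /=; case E: (nbv a) Hnz => [|j] // _.
by rewrite -e1 E => -[->]; rewrite /el /= h1 h2.
Qed.

Lemma main_simple : simple_graph r0 r1 r2.
Proof.
split.
  move=> [k a]; rewrite vcls_eq; apply/negP => /eqP /vl_bv /=; rewrite val_bb => E.
  by case: (K7_at a a) => h _; rewrite E eqxx in h.
move=> x y /eqP; rewrite vcls_eq => /eqP E1 /eqP; rewrite vcls_eq => /eqP E2.
apply/eqP; rewrite ecls_eq; apply/eqP.
case Hx: (nbv x.2 != 0); first exact: simple_aux.
have H : nbv (r0 x).2 != 0.
  move/negbFE/eqP: Hx; case: x E1 E2 => k a E1 E2 /= Hx.
  by rewrite val_bb; case: (K7_at a a) => h _; rewrite Hx in h.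
have := simple_aux (x := r0 x) (y := r0 y) E2; rewrite !RR // => /(_ E1 H).
by rewrite !el_R.
Qed.

End Main.

Lemma ioP0 n : @io n (Posz 0) = 0%R. Proof. by []. Qed.

Lemma connect_map (T U : finType) (e : rel T) (e' : rel U) (f : T -> U) :
  (forall a b, e a b -> e' (f a) (f b)) -> forall a b, connect e a b -> connect e' (f a) (f b).
Proof.
move=> H a b /connectP [p]; elim: p a => [|c p IH] a /=; first by move=> _ ->.
by case/andP=> Hac Hp Hb; apply: connect_trans (connect1 (H _ _ Hac)) (IH _ Hp Hb).
Qed.

Section Core.
Variable n : nat.
Local Notation Z := 'I_n.+1.
Local Notation V := (Z * 'I_6)%type.
Variable e : rel V.
Variable good : pred V.
Hypothesis e_sym : symmetric e.
Hypothesis e_in : forall k (p p' : 'I_6), p != p' ->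
  ~~ (((p == 0 :> nat) && (p' == 2 :> nat)) || ((p == 2 :> nat) && (p' == 0 :> nat))) -> e (k, p) (k, p').
Hypothesis e_link : forall k, e (k, inord 0) (k + io 1, inord 2)%R.
Hypothesis one_bad : forall a b, ~~ good a -> ~~ good b -> a = b.

Definition G : rel V := fun a b => [&& good a, good b & e a b].

Lemma G_sym : symmetric G.
Proof. by move=> a b; rewrite /G e_sym andbA andbCA -andbA. Qed.

Let o (j : nat) : 'I_6 := inord j.

Lemma copy_conn k (p p' : 'I_6) : good (k, p) -> good (k, p') -> connect G (k, p) (k, p').
Proof.
move=> gp gp'.
case: (eqVneq p p') => [->|neq]; first exact: connect0.
case: (boolP (((p == 0 :> nat) && (p' == 2 :> nat)) || ((p == 2 :> nat) && (p' == 0 :> nat)))) => H; last first.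
  by apply: connect1; rewrite /G gp gp' e_in.
have [q gq Hq] : exists2 q : 'I_6, good (k, q) & (q == 1 :> nat) || (q == 3 :> nat).
  case: (boolP (good (k, o 1))) => g1; first by exists (o 1); rewrite // /o inordK.
  exists (o 3); last by rewrite /o inordK.
  case: (boolP (good (k, o 3))) => // g3.
  by have := one_bad g1 g3 => -[] /(congr1 (@nat_of_ord _)); rewrite /o !inordK.
have np : (p == 0 :> nat) || (p == 2 :> nat) by case/orP: H => /andP[-> _]; rewrite ?orbT.
have np' : (p' == 0 :> nat) || (p' == 2 :> nat) by case/orP: H => /andP[_ ->]; rewrite ?orbT.
have E1 : G (k, p) (k, q).
  rewrite /G gp gq e_in //; first by apply/negP => /eqP E; subst; lia.
  by lia.
have E2 : G (k, q) (k, p').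
  rewrite /G gp' gq e_in //; first by apply/negP => /eqP E; subst; lia.
  by lia.
exact: connect_trans (connect1 E1) (connect1 E2).
Qed.


Lemma exists_good k : exists q : 'I_6, good (k, q).
Proof.
case: (boolP (good (k, o 1))) => g1; first by exists (o 1).
exists (o 3); case: (boolP (good (k, o 3))) => // g3.
by have := one_bad g1 g3 => -[] /(congr1 (@nat_of_ord _)); rewrite /o !inordK.
Qed.

Definition j0 : Z :=
  if [pick b | ~~ good b] is Some b then (if (b.2 == 2 :> nat) then b.1 - io 1 else b.1)%R else 0%R.

Lemma link_ok k : k != j0 -> good (k, o 0) && good (k + io 1, o 2)%R.
Proof.
rewrite /j0; case: pickP => [b Hb|Hn] Hk; last by rewrite !(negbFE (Hn _)).
apply/andP; split.
  case: (boolP (good (k, o 0))) => // g; have Eb := one_bad g Hb; subst b.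
  by move: Hk; rewrite /= /o inordK // eqxx.
case: (boolP (good (k + io 1, o 2)%R)) => // g; have Eb := one_bad g Hb; subst b.
by move: Hk; rewrite /= /o inordK //= addrK eqxx.
Qed.

Lemma chain_conn i : i < n.+1 -> forall p q,
  good (j0 + io 1 + io (Posz i), p)%R -> good (j0 + io 1, q)%R ->
  connect G (j0 + io 1 + io (Posz i), p)%R (j0 + io 1, q)%R.
Proof.
elim: i => [|i IH] Hi p q gp gq.
  by move: gp; rewrite ioP0 addr0 => gp; exact: copy_conn.
have Hne : (j0 + io 1 + io (Posz i))%R != j0.
  rewrite -addrA -ioD -(PoszD 1 i) add1n.
  apply/negP => /eqP /(congr1 (fun t => t - j0)%R); rewrite addrC addrK subrr.
  by apply/eqP; apply: io_neq0; rewrite Hi.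
case/andP: (link_ok Hne) => g0 g2.
have Ec : (j0 + io 1 + io (Posz i.+1) = j0 + io 1 + io (Posz i) + io 1)%R by rewrite ioS addrA.
rewrite Ec in gp *.
apply: connect_trans (copy_conn gp g2) _.
apply: connect_trans (IH (ltnW Hi) _ _ g0 gq).
apply: connect1; rewrite G_sym /G g0 g2 /=.
exact: e_link.
Qed.

Lemma core_conn y z : good y -> good z -> connect G y z.
Proof.
have [q gq] := exists_good (j0 + io 1)%R.
have H : forall y, good y -> connect G y (j0 + io 1, q)%R.
  case=> k p gp.
  have Ek : k = (j0 + io 1 + io (Posz (k - (j0 + io 1))%R))%R by rewrite -ord_io addrC subrK.
  rewrite Ek in gp *; apply: chain_conn => //; exact: ltn_ord.
move=> gy gz; apply: connect_trans (H _ gy) _.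
by rewrite (sym_connect_sym G_sym); exact: H.
Qed.

End Core.


Lemma has_ord (P : pred nat) : has P I84 -> exists a : 'I_84, P a.
Proof. by case/hasP => x; rewrite mem_iota add0n => /andP[_ Hx] Px; exists (Ordinal Hx). Qed.

Lemma K8_hub p : p < 6 -> exists a : 'I_84, nbv a = p.+1 /\ nbv (nb 0 a) = 0.
Proof.
move=> Hp; case/andP: K8_ok => /allP /(_ p) H _.
have := H ltac:(by rewrite mem_iota); case/andP => /has_ord [a] /andP[/eqP h1 /eqP h2] _.
by exists a.
Qed.

Lemma K8_rim (p p' : nat) : p < 6 -> p' < 6 -> p != p' ->
  ~~ (((p == 0) && (p' == 2)) || ((p == 2) && (p' == 0))) ->
  exists a : 'I_84, [/\ nbv a = p.+1, nbv (nb 0 a) = p'.+1 & nvo 0 a = 0%R].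
Proof.
move=> Hp Hp' H1 H2; case/andP: K8_ok => /allP /(_ p) H _.
have := H ltac:(by rewrite mem_iota); case/andP => _ /allP /(_ p') H'.
have := H' ltac:(by rewrite mem_iota) => /implyP; rewrite H1 H2 => /(_ isT) /has_ord [a] /and3P[/eqP h1 /eqP h2 /eqP h3].
by exists a.
Qed.

Lemma K8_link : exists a : 'I_84, [/\ nbv a = 1, nbv (nb 0 a) = 3 & nvo 0 a = 1%R].
Proof.
case/andP: K8_ok => _ /has_ord [a] /and3P[/eqP h1 /eqP h2 /eqP h3].
by exists a.
Qed.

Section TC.
Variable n : nat.
Local Notation Z := 'I_n.+1.
Local Notation D := (D n).
Local Notation r0 := (@R n 0).
Local Notation r1 := (@R n 1).
Local Notation r2 := (@R n 2).
Local Notation VC := (vcls r1 r2).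

Definition hubF : D := (0%R, inord 0).
Definition rimF (P : Z * 'I_6) : D := (P.1, inord (nvc P.2.+1)).
Definition hubV := VC hubF.
Definition rimV P := VC (rimF P).

Lemma vl_hub : vl hubF = None. Proof. by rewrite /vl /= inordK. Qed.
Lemma vl_rim P : vl (rimF P) = Some P.
Proof.
case: P => k p; have Hp : p.+1 < 7 by rewrite ltnS ltn_ord.
by case: (nvc_ok Hp) => h1 h2; rewrite /vl /= inordK // h2 inord_val.
Qed.

Lemma verts_cases u : u \in verts r1 r2 -> u = hubV \/ exists P, u = rimV P.
Proof.
case/imsetP => x _ ->; case E: (vl x) => [P|].
  by right; exists P; apply/eqP; rewrite vcls_eq vl_rim E.
by left; apply/eqP; rewrite vcls_eq vl_hub E.
Qed.

Lemma hubV_in : hubV \in verts r1 r2. Proof. by apply/imsetP; exists hubF. Qed.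
Lemma rimV_in P : rimV P \in verts r1 r2. Proof. by apply/imsetP; exists (rimF P). Qed.
Lemma rim_neq_hub P : rimV P != hubV. Proof. by rewrite vcls_eq vl_rim vl_hub. Qed.
Lemma rimV_inj P Q : rimV P = rimV Q -> P = Q.
Proof. by move/eqP; rewrite vcls_eq !vl_rim => /eqP []. Qed.

Lemma adj_lab (x y : D) : vl x != vl y -> (exists z, vl z = vl x /\ vl (r0 z) = vl y) ->
  adj r0 (VC x) (VC y).
Proof.
move=> Hne [z [H1 H2]]; rewrite /adj vcls_eq Hne /=.
by apply/existsP; exists z; rewrite !in_vcls H1 H2 !eqxx.
Qed.

Lemma adj_sym u w : adj r0 u w -> adj r0 w u.
Proof.
rewrite /adj => /andP[Hne /existsP[z /andP[h1 h2]]].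
by rewrite eq_sym Hne /=; apply/existsP; exists (r0 z); rewrite h2 RR.
Qed.

Lemma adj_hub P : adj r0 (rimV P) hubV.
Proof.
case: P => k p; have [a [h1 h2]] := K8_hub (ltn_ord p).
apply: adj_lab; first by rewrite vl_rim vl_hub.
by exists (k, a); rewrite vl_rim vl_hub /vl /R /= h1 inord_val val_bb h2.
Qed.

Lemma adj_in k (p p' : 'I_6) : p != p' ->
  ~~ (((p == 0 :> nat) && (p' == 2 :> nat)) || ((p == 2 :> nat) && (p' == 0 :> nat))) ->
  adj r0 (rimV (k, p)) (rimV (k, p')).
Proof.
move=> H1 H2; have [a [h1 h2 h3]] := K8_rim (ltn_ord p) (ltn_ord p') H1 H2.
apply: adj_lab; first by rewrite !vl_rim; apply: contra H1 => /eqP [] ->.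
by exists (k, a); rewrite !vl_rim /vl /R /= h1 inord_val val_bb h2 h3 io0 addr0 inord_val.
Qed.

Lemma adj_link k : adj r0 (rimV (k, inord 0)) (rimV (k + io 1, inord 2)%R).
Proof.
have [a [h1 h2 h3]] := K8_link.
apply: adj_lab.
  rewrite !vl_rim; apply/negP => /eqP [] _ /(congr1 (@nat_of_ord _)).
  by rewrite !inordK.
by exists (k, a); rewrite !vl_rim /vl /R /= h1 val_bb h2 h3.
Qed.


Lemma adj_symb u w : adj r0 u w = adj r0 w u.
Proof. by apply/idP/idP; apply: adj_sym. Qed.

Lemma main_three : three_connected r0 r1 r2.
Proof.
split; first by have := card_verts n; lia.
move=> S HS u w /setDP[Hu Su] /setDP[Hw Sw].
pose Rl : rel {set D} := fun a b =>
  [&& a \in verts r1 r2 :\: S, b \in verts r1 r2 :\: S & adj r0 a b].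
change (connect Rl u w).
have Rl_sym : symmetric Rl.
  by move=> a b; rewrite /Rl adj_symb andbA andbCA -andbA.
case: (boolP (hubV \in S)) => HS0.
  case: (verts_cases Hu) => [Eu|[P Eu]]; first by rewrite Eu HS0 in Su.
  case: (verts_cases Hw) => [Ew|[Q Ew]]; first by rewrite Ew HS0 in Sw.
  subst u w.
  have one_bad : forall a b, ~~ (rimV a \notin S) -> ~~ (rimV b \notin S) -> a = b.
    move=> a b /negbNE Ha /negbNE Hb; apply/eqP/negPn/negP => Hab.
    have Hsub : hubV |: [set rimV a; rimV b] \subset S.
      by apply/subsetP => z; rewrite !inE => /orP[|/orP[]] /eqP ->.
    have := subset_leq_card Hsub; rewrite cardsU1 cards2 !inE negb_or.
    rewrite !(eq_sym hubV) !rim_neq_hub /=.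
    have -> : (rimV a != rimV b) by apply: contra Hab => /eqP /rimV_inj ->.
    by move=> H; have := leq_trans H HS.
  have := @core_conn n (fun P Q => adj r0 (rimV P) (rimV Q)) (fun P => rimV P \notin S)
     (fun P Q => adj_symb _ _) (@adj_in) (@adj_link) one_bad P Q Su Sw.
  apply: connect_map => a b /and3P[ga gb eab].
  by rewrite /Rl !inE ga gb !rimV_in eab.
have Hh : forall v, v \in verts r1 r2 -> v \notin S -> connect Rl v hubV.
  move=> v Hv Sv; case: (verts_cases Hv) => [->|[P EP]]; first exact: connect0.
  subst v; apply: connect1.
  by rewrite /Rl !inE Sv HS0 rimV_in hubV_in adj_hub.
apply: connect_trans (Hh u Hu Su) _.
by rewrite (sym_connect_sym Rl_sym); exact: Hh.
Qed.

End TC.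

Lemma incT_ok u t : u < 7 -> t < 14 -> nth false (nth [::] incT u) t = inc u t.
Proof.
move=> hu ht; rewrite /incT (nth_map 0) ?size_iota // (nth_map 0) ?size_iota //.
by rewrite !nth_iota.
Qed.

Lemma inc_of (a : 'I_84) : inc (nbv a) (nbf a).
Proof. by apply/hasP; exists (nat_of_ord a); rewrite ?mem_iota ?add0n ?ltn_ord ?eqxx. Qed.

Lemma K9_at u1 u2 t1 t2 : u1 < 7 -> u2 < 7 -> t1 < 14 -> t2 < 14 -> u1 != u2 -> t1 != t2 ->
  inc u1 t1 -> inc u1 t2 -> inc u2 t1 -> inc u2 t2 ->
  exists a : 'I_84, [/\ nbv a = u1, nbv (nb 0 a) = u2, nbf a = t1 & nbf (nb 2 a) = t2].
Proof.
move=> hu1 hu2 ht1 ht2 n12 m12 i11 i12 i21 i22.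
have H := K9_ok; unfold K9 in H; cbv beta zeta in H.
move: H => /allP /(_ u1 ltac:(by rewrite mem_iota)) /allP /(_ u2 ltac:(by rewrite mem_iota)).
move=> /allP /(_ t1 ltac:(by rewrite mem_iota)) /allP /(_ t2 ltac:(by rewrite mem_iota)).
rewrite !incT_ok // n12 m12 i11 i12 i21 i22 => /implyP /(_ isT).
by move=> /has_ord [a] /and4P[/eqP h1 /eqP h2 /eqP h3 /eqP h4]; exists a.
Qed.

Lemma K9b_at (a a' : 'I_84) : nbf a = nbf a' -> nbf a != 0 -> nbv a = nbv a' -> nbv a != 0 -> nfo a = nfo a'.
Proof.
move=> e1 h1 e2 h2.
have := allF_ord K9b_ok a => /allP /(_ a' ltac:(by rewrite mem_iota add0n ltn_ord)).
by move=> /implyP H; apply/eqP/H; rewrite h1 h2 e1 e2 !eqxx.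
Qed.

Section FM.
Variable n : nat.
Local Notation Z := 'I_n.+1.
Local Notation D := (D n).
Local Notation r0 := (@R n 0).
Local Notation r1 := (@R n 1).
Local Notation r2 := (@R n 2).

Lemma R2v i (x : D) : nat_of_ord (R i x).2 = nb i x.2.
Proof. exact: val_bb. Qed.

Lemma vl_none (x : D) : nbv x.2 = 0 -> vl x = None.
Proof. by rewrite /vl => ->. Qed.
Lemma vl_some (x : D) j : nbv x.2 = j.+1 -> vl x = Some (x.1, inord j).
Proof. by rewrite /vl => ->. Qed.
Lemma fl_none (x : D) : nbf x.2 = 0 -> fl x = None.
Proof. by rewrite /fl => ->. Qed.
Lemma fl_some (x : D) j : nbf x.2 = j.+1 -> fl x = Some (x.1 - io (nfo x.2), inord j)%R.
Proof. by rewrite /fl => ->. Qed.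

Lemma corner (y y' : D) : fl y = fl y' -> nbf y.2 != 0 -> nbv y.2 = nbv y'.2 -> vl y = vl y'.
Proof.
move=> Ef hf Ev.
have Ef' := fl_bf Ef.
case Ev0: (nbv y.2) => [|j]; first by rewrite !vl_none // -Ev.
rewrite (vl_some Ev0) (@vl_some y' j ltac:(by rewrite -Ev)).
case Ef0: (nbf y.2) hf => [|i] // _.
move: Ef; rewrite (fl_some Ef0) (@fl_some y' i ltac:(by rewrite -Ef')).
have -> : nfo y.2 = nfo y'.2 by apply: K9b_at => //; rewrite ?Ef0 ?Ev0.
by move=> /(congr1 (fun o => if o is Some p then p.1 else 0%R)) /subIr_Z ->.
Qed.
Lemma corner_inv (y y' : D) : vl y = vl y' -> nbv y.2 != 0 -> nbf y.2 = nbf y'.2 -> nbf y.2 != 0 -> fl y = fl y'.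
Proof.
move=> Ev hv Ef hf.
have Ev' := vl_bv Ev.
case Ef0: (nbf y.2) hf => [|i] // _.
rewrite (fl_some Ef0) (@fl_some y' i ltac:(by rewrite -Ef)).
case Ev0: (nbv y.2) hv => [|j] // _.
move: Ev; rewrite (vl_some Ev0) (@vl_some y' j ltac:(by rewrite -Ev')) => -[->].
have -> : nfo y.2 = nfo y'.2 by apply: K9b_at => //; rewrite ?Ef0 ?Ev0.
done.
Qed.


Lemma meet_aux (p1 p3 q1 q3 : D) :
  vl p1 = vl q1 -> vl p3 = vl q3 -> fl p1 = fl p3 -> fl q1 = fl q3 ->
  fl p1 != fl q1 -> vl p1 != vl p3 -> nbf p1.2 != 0 ->
  exists z : D, [/\ vl z = vl p1, vl (r0 z) = vl p3, fl z = fl p1 & fl (r2 z) = fl q1].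
Proof.
move=> V1 V3 F1 F3 Fne Vne ht1.
have eu1 := vl_bv V1; have eu2 := vl_bv V3; have et1 := fl_bf F1; have et2 := fl_bf F3.
have Hu : nbv p1.2 != nbv p3.2.
  apply/negP => /eqP Eu; move/negP: Vne; apply; apply/eqP; exact: corner.
have Ht : nbf p1.2 != nbf q1.2.
  apply/negP => /eqP Et; move/negP: Fne; apply; apply/eqP.
  case: (boolP (nbv p1.2 != 0)) => hu1; first exact: corner_inv.
  have hu2 : nbv p3.2 != 0 by move/negbNE/eqP: hu1 => h; rewrite h eq_sym in Hu.
  rewrite F1 F3; apply: corner_inv => //; first by rewrite -et1 Et.
  by rewrite -et1.
case: (K4_rng p1.2) (K4_rng p3.2) (K4_rng q1.2) => rg1 _ rg2 [rg3 _ _] [_ _ rg4].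
have [a [h1 h2 h3 h4]] := K9_at rg1 rg3 rg2 rg4 Hu Ht (inc_of p1.2)
  ltac:(by rewrite eu1; exact: inc_of) ltac:(by rewrite et1; exact: inc_of)
  ltac:(by rewrite eu2 et2; exact: inc_of).
pose z : D := ((p1.1 - io (nfo p1.2) + io (nfo a))%R, a).
have Fz : fl z = fl p1.
  case Et1: (nbf p1.2) ht1 => [|j] // _.
  rewrite (fl_some Et1) (@fl_some z j ltac:(by rewrite /= h3 Et1)).
  by congr (Some (_, _)); exact: addrK.
have Vz : vl z = vl p1 by apply: corner => //=; rewrite h3.
have Vz0 : vl (r0 z) = vl p3.
  apply: corner; first by rewrite fl_R // Fz F1.
    by rewrite R2v (K4_f a (i := 0) isT).1 h3.
  by rewrite R2v h2.
exists z; split => //.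
case Et2: (nbf q1.2) => [|j2].
  rewrite (fl_none Et2) fl_none //.
  by rewrite R2v h4 Et2.
case: (boolP (nbv p1.2 != 0)) => hu1.
  apply: corner_inv.
  - by rewrite vl_R // Vz V1.
  - by rewrite R2v (K4_v a (i := 2) isT).1 h1.
  - by rewrite R2v h4.
  - by rewrite R2v h4 Et2.
have hu2 : nbv p3.2 != 0 by move/negbNE/eqP: hu1 => h; rewrite h eq_sym in Hu.
rewrite -(@fl_R n 0 (r2 z)) // F3.
apply: corner_inv.
- by rewrite r02 vl_R // Vz0 V3.
- by rewrite r02 R2v (K4_v _ (i := 2) isT).1 R2v h2.
- by rewrite R2v (K4_f _ (i := 0) isT).1 R2v h4 -et2 Et2.
- by rewrite R2v (K4_f _ (i := 0) isT).1 R2v h4 Et2.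
Qed.


Lemma meet_key (p1 p3 q1 q3 : D) :
  vl p1 = vl q1 -> vl p3 = vl q3 -> fl p1 = fl p3 -> fl q1 = fl q3 ->
  fl p1 != fl q1 -> vl p1 != vl p3 ->
  exists z : D, [/\ vl z = vl p1, vl (r0 z) = vl p3 &
     (fl z = fl p1 /\ fl (r2 z) = fl q1) \/ (fl z = fl q1 /\ fl (r2 z) = fl p1)].
Proof.
move=> V1 V3 F1 F3 Fne Vne.
case: (boolP (nbf p1.2 != 0)) => ht.
  have [z [h1 h2 h3 h4]] := meet_aux V1 V3 F1 F3 Fne Vne ht.
  by exists z; split => //; left.
have hq : nbf q1.2 != 0.
  apply/negP => /eqP h; move/negP: Fne; apply.
  by move/negbNE/eqP: ht => ht; rewrite fl_none // fl_none.
have [z [h1 h2 h3 h4]] := meet_aux (esym V1) (esym V3) F3 F1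
   ltac:(by rewrite eq_sym) ltac:(by rewrite -V1 -V3) hq.
by exists z; split; [rewrite h1 V1 | rewrite h2 V3 | right].
Qed.

Lemma main_faces : faces_meet_connected r0 r1 r2.
Proof.
move=> x y Hxy CV CE u w Hu Hw.
have memCV : forall v, v \in CV -> exists p, v = vcls r1 r2 p /\
   exists p1 q1, [/\ vl p1 = vl p, fl p1 = fl x, vl q1 = vl p & fl q1 = fl y].
  move=> v; rewrite /CV inE => /and3P[/imsetP[p _ ->] /set0Pn[p1] /setIP[A1 B1] /set0Pn[q1] /setIP[A2 B2]].
  exists p; split => //; exists p1, q1.
  move: A1 B1 A2 B2; rewrite !in_vcls !in_fcls.
  by move=> /eqP -> /eqP -> /eqP -> /eqP ->.
have [p [Eu [p1 [q1 [V1 F1 W1 G1]]]]] := memCV u Hu.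
have [p' [Ew [p3 [q3 [V3 F3 W3 G3]]]]] := memCV w Hw.
case: (eqVneq (vl p) (vl p')) => Hpp.
  have -> : u = w by rewrite Eu Ew; apply/eqP; rewrite vcls_eq Hpp.
  exact: connect0.
have Hfl : fl x != fl y by rewrite -fcls_eq.
have [z [Z1 Z2 Z3]] := @meet_key p1 p3 q1 q3 ltac:(by rewrite V1 W1) ltac:(by rewrite V3 W3)
  ltac:(by rewrite F1 F3) ltac:(by rewrite G1 G3) ltac:(by rewrite F1 G1) ltac:(by rewrite V1 V3).
have Hx : exists2 t, t \in ecls r0 r2 z & t \in fcls r0 r1 x.
  case: Z3 => [[A _]|[_ B]].
    by exists z; rewrite ?in_ecls ?in_fcls // A F1.
  by exists (r2 z); rewrite ?in_ecls ?in_fcls ?el_R // B F1.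
have Hy : exists2 t, t \in ecls r0 r2 z & t \in fcls r0 r1 y.
  case: Z3 => [[_ B]|[A _]].
    by exists (r2 z); rewrite ?in_ecls ?in_fcls ?el_R // B G1.
  by exists z; rewrite ?in_ecls ?in_fcls // A G1.
apply: connect1; rewrite Hu Hw /=.
apply/existsP; exists (ecls r0 r2 z); apply/andP; split.
  rewrite /CE inE; apply/and3P; split.
  - by apply/imsetP; exists z.
  - by case: Hx => t h1 h2; apply/set0Pn; exists t; rewrite inE h1 h2.
  - by case: Hy => t h1 h2; apply/set0Pn; exists t; rewrite inE h1 h2.
apply/existsP; exists z; rewrite in_ecls eqxx /= Eu Ew !in_vcls Z1 Z2 V1 V3.
by rewrite !eqxx.
Qed.

End FM.

Section Aut.
Variable n : nat.
Local Notation Z := 'I_n.+1.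
Local Notation D := (D n).
Local Notation D3 := (D * 'I_3)%type.
Local Notation T0 := (trunc_r0 (@R n 0) (@R n 1)).
Local Notation T1 := (trunc_r1 (@R n 2)).
Local Notation T2 := (trunc_r2 (@R n 2)).

Definition TT (j : nat) (z : D3) : D3 :=
  let: ((k, a), i) := z in
  ((k + io (ntv j (nat_of_ord a, nat_of_ord i)), inord (ntb j (nat_of_ord a, nat_of_ord i)).1), inord (ntb j (nat_of_ord a, nat_of_ord i)).2)%R.

Lemma ord3_cases (i : 'I_3) : i = inord 0 \/ i = inord 1 \/ i = inord 2.
Proof.
case: i => [[|[|[|i]]] Hi] //.
- by left; apply: val_inj; rewrite /= inordK.
- by right; left; apply: val_inj; rewrite /= inordK.
- by right; right; apply: val_inj; rewrite /= inordK.
Qed.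

Lemma val3 j : j < 3 -> \val (inord j : 'I_3) = j.
Proof. move=> h; exact: inordK h. Qed.

Lemma T0E (z : D3) : T0 z = TT 0 z.
Proof.
by case: z => [[k a] i]; case: (ord3_cases i) => [->|[->|->]]; rewrite /TT /trunc_r0 !val3.
Qed.
Lemma T1E (z : D3) : T1 z = TT 1 z.
Proof.
by case: z => [[k a] i]; case: (ord3_cases i) => [->|[->|->]]; rewrite /TT /trunc_r1 !val3 ?ioP0 ?io0 ?addr0 ?inord_val.
Qed.
Lemma T2E (z : D3) : T2 z = TT 2 z.
Proof.
by case: z => [[k a] i]; case: (ord3_cases i) => [->|[->|->]]; rewrite /TT /trunc_r2 !val3 ?ioP0 ?io0 ?addr0 ?inord_val.
Qed.

Definition sigm (z : D3) : D3 :=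
  let: ((k, a), i) := z in
  ((- k, inord (ntau (nat_of_ord a, nat_of_ord i)).1), inord (ntau (nat_of_ord a, nat_of_ord i)).2)%R.

Lemma K10_at (a : 'I_84) (i : 'I_3) : [/\ (ntau (nat_of_ord a, nat_of_ord i)).1 < 84,
  (ntau (nat_of_ord a, nat_of_ord i)).2 < 3,
  ntau (ntau (nat_of_ord a, nat_of_ord i)) = (nat_of_ord a, nat_of_ord i) &
  forall j, j < 3 -> ntau (ntb j (nat_of_ord a, nat_of_ord i)) = ntb j (ntau (nat_of_ord a, nat_of_ord i)) /\
      ntv j (ntau (nat_of_ord a, nat_of_ord i)) = (- ntv j (nat_of_ord a, nat_of_ord i))%R].
Proof.
case/andP: K10_ok => /allP /(_ a ltac:(by rewrite mem_iota add0n ltn_ord)) /allP.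
move=> /(_ i ltac:(by rewrite mem_iota add0n ltn_ord)) /and4P[h1 h2 /eqP h3 /allP h4] _.
split => // j Hj; case/andP: (h4 j ltac:(by rewrite mem_iota)) => /eqP -> /eqP ->.
by [].
Qed.

Lemma K11_at (a : 'I_84) (i : 'I_3) j : j < 3 ->
  (ntb j (nat_of_ord a, nat_of_ord i)).1 < 84 /\ (ntb j (nat_of_ord a, nat_of_ord i)).2 < 3.
Proof.
move=> Hj; move: (allF_ord K11_ok a) => /allP /(_ i ltac:(by rewrite mem_iota add0n ltn_ord)).
by move=> /allP /(_ j ltac:(by rewrite mem_iota)) /andP.
Qed.

Lemma sigmK : involutive sigm.
Proof.
move=> [[k a] i]; rewrite /sigm; case: (K10_at a i) => h1 h2 h3 _.
by rewrite !inordK // -surjective_pairing h3 /= opprK !inord_val.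
Qed.

Lemma sigm_TT j z : j < 3 -> sigm (TT j z) = TT j (sigm z).
Proof.
case: z => [[k a] i] Hj; rewrite /sigm /TT.
case: (K10_at a i) => h1 h2 _ /(_ j Hj) [h3 h4].
case: (K11_at a i Hj) => g1 g2.
by rewrite !inordK // -!surjective_pairing h3 h4 ioN opprD.
Qed.

Definition sigP : {perm D3} := perm (can_inj sigmK).

Lemma sigP_aut : sigP \in map_aut T0 T1 T2.
Proof.
rewrite inE; apply/forallP => z.
by rewrite !permE T0E T1E T2E !sigm_TT // -T0E -T1E -T2E !eqxx.
Qed.

Definition liftf (p : {perm D}) (z : D3) : D3 := (p z.1, z.2).
Lemma liftf_inj p : injective (liftf p).
Proof. by move=> [x i] [y j] [/perm_inj -> ->]. Qed.
Definition liftP p : {perm D3} := perm (@liftf_inj p).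

Lemma liftP_aut p : p \in map_aut (@R n 0) (@R n 1) (@R n 2) -> liftP p \in map_aut T0 T1 T2.
Proof.
rewrite !inE => /forallP H; apply/forallP => [[x i]]; rewrite !permE /liftf.
have /and3P[/eqP h0 /eqP h1 /eqP h2] := H x.
case: (ord3_cases i) => [->|[->|->]]; rewrite /trunc_r0 /trunc_r1 /trunc_r2 !val3 //=.
- by rewrite ?h0 ?h1 ?h2 ?eqxx.
- by rewrite ?h0 ?h1 ?h2 ?eqxx.
- by rewrite ?h0 ?h1 ?h2 ?eqxx.
Qed.

Lemma card_aut : #|map_aut (@R n 0) (@R n 1) (@R n 2)| < #|map_aut T0 T1 T2|.
Proof.
have inj : injective liftP.
  move=> p q E; apply/permP => x.
  by have := congr1 (fun f : {perm D3} => f (x, ord0)) E; rewrite !permE /liftf => -[].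
rewrite -(card_imset _ inj); apply: proper_card; apply/properP; split.
  by apply/subsetP => f /imsetP [p Hp ->]; exact: liftP_aut.
exists sigP; first exact: sigP_aut.
apply/imsetP => -[p _ E].
have := congr1 (fun f : {perm D3} => nat_of_ord (f ((0%R, inord 0), inord 0)).2) E.
by rewrite !permE /sigm /liftf !inordK.
Qed.

End Aut.


Definition Dev_D (n : nat) : finType := ('I_n.+1 * 'I_84)%type.


Theorem lemma9 (g : nat) : (1 <= g)%N ->
  exists (D : finType) (r0 r1 r2 : D -> D),
    [/\ polyhedral_map r0 r1 r2, has_genus r0 r1 r2 g &
        (#|map_aut r0 r1 r2| <
         #|map_aut (trunc_r0 r0 r1) (trunc_r1 r2) (trunc_r2 r2)|)%N].
Proof.
case: g => [//|n] _.
exists (Dev_D n), (@R n 0), (@R n 1), (@R n 2).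
split.
- split; [exact: main_is_map | exact: main_simple | exact: main_three | exact: main_faces].
- exact: main_genus.
- exact: card_aut.
Qed.
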